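(* Let $\overline{G}$ be the roommate diversity game described in the context. No top-type outcome of $\overline{G}$ is popular.
   Context: In a roommate diversity game with agent set $N=R\cup B$ ($R$ red, $B$ blue) and room size $s$, an outcome is a partition of $N$ into rooms of size $s$; $\pi(a)$ is the room containing $a$ and $\theta(C)=|C\cap R|/|C|$. Each agent $a$ has a trichotomous preference given by a partition of the fractions into sets $D_a^+$ (approved), $D_a^n$ (neutral), $D_a^-$ (disapproved), possibly empty, with approved $\succ$ neutral $\succ$ disapproved and indifference within each set. Agent $a$ prefers $\pi$ to $\pi'$ if it strictly prefers $\theta(\pi(a))$ to $\theta(\pi'(a))$; $N(\pi,\pi')$ is the set of agents preferring $\pi$ to $\pi'$, $\phi(\pi,\pi')=|N(\pi,\pi')|-|N(\pi',\pi)|$, and $\pi$ is popular if $\phi(\pi,\pi')\ge0$ for all outcomes $\pi'$. The game $\overline{G}$: $R=\{r_1,r_2,r_3\}$, $B=\{b_1,\dots,b_6\}$, $s=3$; $r_1$: $D^+=\{1/3\}$, $D^-=\{2/3,1\}$; $r_2,r_3$: $D^+=\{2/3\}$, $D^-=\{1/3,1\}$; $b_1,\dots,b_4$: $D^+=\{1/3\}$, $D^n=\{2/3\}$, $D^-=\{0\}$; $b_5,b_6$: $D^+=\{0\}$, $D^-=\{1/3,2/3\}$ (a red agent is never in a room of fraction $0$, a blue agent never in one of fraction $1$). An outcome is top-type if it equals $\{\{r_1,\hat b_1,\hat b_2\},\{r_2,r_3,\hat b_3\},\{b_5,b_6,\hat b_4\}\}$ for some enumeration $\hat b_1,\dots,\hat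 b_4$ of $\{b_1,b_2,b_3,b_4\}$. *)

(* Defs.v *)
From mathcomp Require Import all_boot all_order all_algebra.
Set Implicit Arguments. Unset Strict Implicit. Unset Printing Implicit Defensive.
Import Order.TTheory GRing.Theory Num.Theory.

Inductive category := Approved | Neutral | Disapproved.

Definition cat_rank (c : category) : nat :=
  match c with Approved => 2 | Neutral => 1 | Disapproved => 0 end.

Section Game.
Variable T : finType.
Variable Red : {set T}.          (* red agents R; blue agents are ~: Red *)
Variable s : nat.
Variable pref : T -> rat -> category.
  (* pref a q = Approved iff q \in D_a^+, Neutral iff q \in D_a^n,
     Disapproved iff q \in D_a^- *)

Definition theta (C : {set T}) : rat := (#|C :&: Red|)%:R / (#|C|)%:R.

Definition is_outcome (P : {set {set T}}) : bool :=
  partition P [set: T] && [forall C in P, #|C| == s].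

(* pi(a) = pblock P a *)
Definition prefers (a : T) (P Q : {set {set T}}) : bool :=
  (cat_rank (pref a (theta (pblock Q a))) < cat_rank (pref a (theta (pblock P a))))%N.

Definition N_pref (P Q : {set {set T}}) : {set T} := [set a | prefers a P Q].

Definition phi (P Q : {set {set T}}) : int :=
  (#|N_pref P Q|)%:Z - (#|N_pref Q P|)%:Z.

Definition popular (P : {set {set T}}) : Prop :=
  is_outcome P /\ forall Q, is_outcome Q -> (0 <= phi P Q)%R.

End Game.

Definition agent := 'I_9.
Definition r1 : agent := @Ordinal 9 0 isT.
Definition r2 : agent := @Ordinal 9 1 isT.
Definition r3 : agent := @Ordinal 9 2 isT.
Definition b1 : agent := @Ordinal 9 3 isT.
Definition b2 : agent := @Ordinal 9 4 isT.
Definition b3 : agent := @Ordinal 9 5 isT.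
Definition b4 : agent := @Ordinal 9 6 isT.
Definition b5 : agent := @Ordinal 9 7 isT.
Definition b6 : agent := @Ordinal 9 8 isT.

Definition RedG : {set agent} := [set r1; r2; r3].

Definition third : rat := (1%:R / 3%:R)%R.
Definition two_thirds : rat := (2%:R / 3%:R)%R.

(* Fractions not listed in an agent's preference (0 for red agents, 1 for
   blue agents) can never occur for that agent; they are put in D^-. *)
Definition prefG (a : agent) (q : rat) : category :=
  if a == r1 then (if q == third then Approved else Disapproved)
  else if (a == r2) || (a == r3) then
    (if q == two_thirds then Approved else Disapproved)
  else if a \in [set b1; b2; b3; b4] then
    (if q == third then Approved
     else if q == two_thirds then Neutral else Disapproved)
  else (if q == 0%R then Approved else Disapproved).

Definition top_outcome (bh : 'I_4 -> agent) : {set {set agent}} :=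
  [set [set r1; bh (@Ordinal 4 0 isT); bh (@Ordinal 4 1 isT)];
       [set r2; r3; bh (@Ordinal 4 2 isT)];
       [set b5; b6; bh (@Ordinal 4 3 isT)]].

Definition top_type (P : {set {set agent}}) : Prop :=
  exists bh : 'I_4 -> agent,
    injective bh /\ (forall i, bh i \in [set b1; b2; b3; b4]) /\ P = top_outcome bh.

(* Main.v *)
Require Import Defs.
From mathcomp Require Import all_boot all_order all_algebra.
Import Order.TTheory GRing.Theory Num.Theory.
Set Implicit Arguments. Unset Strict Implicit.

Definition agents_list : seq agent := [:: r1; r2; r3; b1; b2; b3; b4; b5; b6].

Lemma agents_all x : x \in agents_list.
Proof.
case: x => [[|[|[|[|[|[|[|[|[|?]]]]]]]]] Hx] //;
  rewrite !inE; apply/orP;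
  by [ left; apply/eqP/val_inj | right; rewrite ?orbA; apply/orP; right; apply/eqP/val_inj | idtac].
Qed.

Lemma agents_cases (Pr : agent -> Prop) : Pr r1 -> Pr r2 -> Pr r3 -> Pr b1 -> Pr b2 ->
  Pr b3 -> Pr b4 -> Pr b5 -> Pr b6 -> forall x, Pr x.
Proof.
move=> h1 h2 h3 h4 h5 h6 h7 h8 h9 x; have := agents_all x; rewrite /agents_list.
by do 9 (case/predU1P => [->//|]).
Qed.

Definition B4 : {set agent} := [set b1; b2; b3; b4].

Lemma B4F u : u \in B4 ->
  ((u == r1) = false) * ((r1 == u) = false) * ((u == r2) = false) * ((r2 == u) = false) *
  ((u == r3) = false) * ((r3 == u) = false) * ((u == b5) = false) * ((b5 == u) = false) *
  ((u == b6) = false) * ((b6 == u) = false) * (u \in B4) * (u \in [set b1; b2; b3; b4]).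
Proof. by rewrite /B4 !inE => /orP[/orP[/orP[]|]|]/eqP->; repeat split; rewrite !inE. Qed.

Lemma U4F (a b c d : agent) : uniq [:: a; b; c; d] ->
  ((a == b) = false) * ((b == a) = false) * ((a == c) = false) * ((c == a) = false) *
  ((a == d) = false) * ((d == a) = false) * ((b == c) = false) * ((c == b) = false) *
  ((b == d) = false) * ((d == b) = false) * ((c == d) = false) * ((d == c) = false).
Proof.
rewrite /= !inE !negb_or => /andP[/and3P[ab ac ad] /andP[/andP[bc bd] /andP[cd _]]].
by repeat split; apply/negbTE; rewrite // eq_sym.
Qed.

Lemma card_eqU (A : {set agent}) (s : seq agent) : uniq s -> (forall x, x \in s) ->
  #|A| = count (fun x => x \in A) s.
Proof.
move=> us alls; rewrite cardE /enum_mem size_filter; apply/permP/uniq_perm => //.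
- by rewrite -enumT enum_uniq.
- by move=> x; rewrite alls -enumT mem_enum.
Qed.

Lemma cover9 a b c d : a \in B4 -> b \in B4 -> c \in B4 -> d \in B4 -> uniq [:: a; b; c; d] ->
  forall x, x \in [:: r1; r2; r3; a; b; c; d; b5; b6].
Proof.
move=> Ha Hb Hc Hd Hu.
have E : B4 = [set a; b; c; d].
  apply/eqP; rewrite eq_sym eqEcard; apply/andP; split.
    apply/subsetP => x Hx; have {Hx} : (x == a) || (x == b) || (x == c) || (x == d) by move: Hx; rewrite !inE.
    by move=> /orP[/orP[/orP[]|]|]/eqP->.
  have -> : #|[set a; b; c; d]| = #|[:: a; b; c; d]| by apply: eq_card => x; rewrite !inE ?orbA.
  have -> : #|B4| = #|[:: b1; b2; b3; b4]| by apply: eq_card => x; rewrite !inE ?orbA.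
  by rewrite (card_uniqP Hu) (@card_uniqP _ [:: b1; b2; b3; b4] isT).
move=> x.
have H : x \in B4 -> x \in [:: r1; r2; r3; a; b; c; d; b5; b6].
  move=> Hx; have {Hx} : (x == a) || (x == b) || (x == c) || (x == d) by move: Hx; rewrite E !inE.
  by move=> /orP[/orP[/orP[]|]|]/eqP->; rewrite !inE eqxx ?orbT.
move: x H; apply: agents_cases => H.
all: try by rewrite !inE eqxx ?orbT.
all: by apply: H; rewrite /B4 !inE.
Qed.

Definition ok3 (A1 A2 A3 : {set agent}) :=
  forall x, ((x \in A1) + (x \in A2) + (x \in A3) = 1)%N.

Lemma triv3 A1 A2 A3 : ok3 A1 A2 A3 -> trivIset [set A1; A2; A3].
Proof.
move=> H; apply/trivIsetP => A B; rewrite !inE.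
move=> /orP[/orP[]|]/eqP-> /orP[/orP[]|]/eqP->; rewrite ?eqxx // => _;
  rewrite disjoints_subset; apply/subsetP => x xA; rewrite inE; apply/negP => xB;
  have := H x; rewrite ?xA ?xB;
  by case: (x \in A1); case: (x \in A2); case: (x \in A3).
Qed.

Lemma part3 A1 A2 A3 : ok3 A1 A2 A3 -> #|A1| = 3 -> #|A2| = 3 -> #|A3| = 3 ->
  is_outcome 3 [set A1; A2; A3].
Proof.
move=> H c1 c2 c3.
apply/andP; split; last first.
  by apply/forall_inP => C; rewrite !inE => /orP[/orP[]|]/eqP->; apply/eqP.
apply/and3P; split; last first.
- rewrite !inE; apply/negP => /orP[/orP[]|]/eqP E.
  + by move: c1; rewrite -E cards0.
  + by move: c2; rewrite -E cards0.
  + by move: c3; rewrite -E cards0.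
- exact: (triv3 H).
apply/eqP/setP => x; rewrite inE; apply/bigcupP.
have := H x; case: (boolP (x \in A1)) => h1.
  by move=> _; exists A1; rewrite // !inE eqxx.
case: (boolP (x \in A2)) => h2.
  by move=> _; exists A2; rewrite // !inE eqxx ?orbT.
case: (boolP (x \in A3)) => h3 //.
by move=> _; exists A3; rewrite // !inE eqxx ?orbT.
Qed.

Lemma theta3 A1 A2 A3 t1 t2 t3 x : ok3 A1 A2 A3 ->
  theta RedG A1 = t1 -> theta RedG A2 = t2 -> theta RedG A3 = t3 ->
  theta RedG (pblock [set A1; A2; A3] x) =
    if x \in A1 then t1 else if x \in A2 then t2 else t3.
Proof.
move=> H e1 e2 e3; have T3 := triv3 H; have := H x.
case: (boolP (x \in A1)) => h1.
  by move=> _; rewrite (@def_pblock _ _ A1) // !inE eqxx.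
case: (boolP (x \in A2)) => h2.
  by move=> _; rewrite (@def_pblock _ _ A2) // !inE eqxx ?orbT.
case: (boolP (x \in A3)) => h3 //.
by move=> _; rewrite (@def_pblock _ _ A3) // !inE eqxx ?orbT.
Qed.

Definition mkP (a b c d : agent) : {set {set agent}} :=
  [set [set r1; a; b]; [set r2; r3; c]; [set b5; b6; d]].

Lemma main_abs a b c d : a \in B4 -> b \in B4 -> c \in B4 -> d \in B4 -> uniq [:: a; b; c; d] ->
  is_outcome 3 (mkP a c d b) /\
   (phi RedG prefG (mkP a b c d) (mkP a c d b) < 0)%R.
Proof.
move=> Ha Hb Hc Hd Hu.
have F := (B4F Ha, B4F Hb, B4F Hc, B4F Hd, U4F Hu).
have cov := cover9 Ha Hb Hc Hd Hu.
have uR : uniq [:: r1; r2; r3; a; b; c; d; b5; b6] by rewrite /= !inE ?F.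
have cR (A : {set agent}) : #|A| = ((r1 \in A) + (r2 \in A) + (r3 \in A) + (a \in A)
  + (b \in A) + (c \in A) + (d \in A) + (b5 \in A) + (b6 \in A))%N.
  by rewrite (card_eqU A uR cov) /= !addnA addn0.
have cases (Pr : agent -> Prop) : Pr r1 -> Pr r2 -> Pr r3 -> Pr a -> Pr b ->
  Pr c -> Pr d -> Pr b5 -> Pr b6 -> forall x, Pr x.
  move=> h1 h2 h3 h4 h5 h6 h7 h8 h9 x; have := cov x.
  by do 9 (case/predU1P => [->//|]).
have ok1 : ok3 [set r1; a; b] [set r2; r3; c] [set b5; b6; d].
  by rewrite /ok3; apply: cases; rewrite !inE ?F ?eqxx.
have ok2 : ok3 [set r1; a; c] [set r2; r3; d] [set b5; b6; b].
  by rewrite /ok3; apply: cases; rewrite !inE ?F ?eqxx.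
have t1 : theta RedG [set r1; a; b] = third.
  by apply/eqP; rewrite /theta !cR /RedG !inE ?F ?eqxx; vm_compute.
have t2 : theta RedG [set r2; r3; c] = two_thirds.
  by apply/eqP; rewrite /theta !cR /RedG !inE ?F ?eqxx; vm_compute.
have t3 : theta RedG [set b5; b6; d] = 0%R.
  by apply/eqP; rewrite /theta !cR /RedG !inE ?F ?eqxx; vm_compute.
have s1 : theta RedG [set r1; a; c] = third.
  by apply/eqP; rewrite /theta !cR /RedG !inE ?F ?eqxx; vm_compute.
have s2 : theta RedG [set r2; r3; d] = two_thirds.
  by apply/eqP; rewrite /theta !cR /RedG !inE ?F ?eqxx; vm_compute.
have s3 : theta RedG [set b5; b6; b] = 0%R.
  by apply/eqP; rewrite /theta !cR /RedG !inE ?F ?eqxx; vm_compute.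
split.
  by apply: part3 => //; rewrite cR !inE ?F ?eqxx.
have N1 : N_pref RedG prefG (mkP a b c d) (mkP a c d b) = [set b].
  apply/setP; apply: cases; rewrite !inE /prefers /mkP (theta3 _ ok1 t1 t2 t3) (theta3 _ ok2 s1 s2 s3);
  by rewrite /prefG ?F !inE ?F ?eqxx; vm_compute.
have N2 : N_pref RedG prefG (mkP a c d b) (mkP a b c d) = [set c; d].
  apply/setP; apply: cases; rewrite !inE /prefers /mkP (theta3 _ ok1 t1 t2 t3) (theta3 _ ok2 s1 s2 s3);
  by rewrite /prefG ?F !inE ?F ?eqxx; vm_compute.
by rewrite /phi N1 N2 cards1 cards2 ?F.
Qed.

Theorem mainTheorem9 (P : {set {set agent}}) :
  top_type P -> ~ popular RedG 3 prefG P.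
Proof.
case=> bh [inj [inB ->]] [_ Hpop].
have Hu : uniq [:: bh (@Ordinal 4 0 isT); bh (@Ordinal 4 1 isT);
                   bh (@Ordinal 4 2 isT); bh (@Ordinal 4 3 isT)].
  by rewrite /= !inE !(inj_eq inj).
have [Ho Hlt] := main_abs (inB _) (inB _) (inB _) (inB _) Hu.
have := Hpop _ Ho.
by rewrite /top_outcome -/(mkP _ _ _ _) leNgt Hlt.
Qed.
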